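(* Let $X\in\mathbb{R}^{n\times p}$ be a fixed matrix with rows $X_1^\top,\dots,X_n^\top$ and nonzero columns $V_1,\dots,V_p$, let $\beta\in\mathbb{R}^p$, let $\epsilon$ be a random vector in $\mathbb{R}^n$, and let $D\subset\mathbb{R}^p$. Let $G:\mathbb{R}^n\to\mathbb{R}$ be a function, and let $\psi=(\psi_1,\dots,\psi_n)$, $\varphi=(\varphi_1,\dots,\varphi_n)$ with each $\psi_i,\varphi_i:\mathbb{R}\to\mathbb{R}$. Fix $q\in(0,1)$ and $c_0>0$. Suppose: (i) there is $c_1>0$ such that $$\Pr\Big\{|\langle \epsilon,\varphi(Xv)-\varphi(X\beta)\rangle|\le c_1\sqrt{n}\,\|v-\beta\|_1 \text{ for all } v\in D\Big\}\ge 1-c_0q;$$ (ii) there is $c_3>0$ such that $G(\psi(z)-\psi(X\beta))\ge c_3\|z-X\beta\|_2^2$ for all $z\in\{Xv: v\in D\}$. Define $$\mu_X=\max_{1\le i<j\le p}\frac{|V_i^\top V_j|}{\|V_i\|_2\|V_j\|_2},\quad a_X=\min_{1\le i\le p}\frac{\|V_i\|_2^2}{n},\quad b_X=\max_{1\le i\le p}\frac{\|V_i\|_2^2}{n},$$ and suppose $a_X+b_X\mu_X>6b_X|\mathrm{spt}(\beta)|\mu_X$. Fix $\tau>0$ such that $$a_X+b_X\mu_X>2b_X(3+4\tau)|\mathrm{spt}(\beta)|\mu_X,$$ and let $c_r=2(1+1/\tau)c_1\sqrt{n}$ and $$\kappa_r=\frac{3(2+1/\tau)\sqrt{2+(1+2\tau)^2}}{a_X+b_X\mu_X}\cdot\frac{c_1}{c_3}.$$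 If $\hat\beta\in D$ is a random variable that always satisfies $$G(\psi(X\hat\beta)-\psi(X\beta))\le 2|\langle\epsilon,\varphi(X\hat\beta)-\varphi(X\beta)\rangle| - c_r(\|\hat\beta\|_1-\|\beta\|_1),$$ then $$\Pr\Big\{\|\hat\beta-\beta\|_2\le \kappa_r\sqrt{|\mathrm{spt}(\beta)|/n}\Big\}\ge 1-c_0q.$$
   Context: For functions $g_1,\dots,g_n:\mathbb{R}\to\mathbb{R}$, $g=(g_1,\dots,g_n)$ and $x\in\mathbb{R}^n$, write $g(x)=(g_1(x_1),\dots,g_n(x_n))^\top$. For $v\in\mathbb{R}^p$, $\|v\|_a$ is the $\ell_a$-norm, and $\mathrm{spt}(v)=\{i: v_i\neq 0\}$ is the support of $v$, with $|\mathrm{spt}(v)|$ its cardinality. $\langle\cdot,\cdot\rangle$ is the Euclidean inner product on $\mathbb{R}^n$. *)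

(* Defs.v *)
From HB Require Import structures.
From mathcomp Require Import all_boot all_order all_algebra.
From mathcomp Require Import all_classical all_reals all_analysis.
Set Implicit Arguments. Unset Strict Implicit. Unset Printing Implicit Defensive.
Import Order.TTheory GRing.Theory Num.Theory.
Local Open Scope ring_scope.

Definition capp (R : realType) (n : nat) (g : 'I_n -> R -> R) (x : 'cV[R]_n)
  : 'cV[R]_n := \col_i g i (x i 0).

Definition inner (R : realType) (n : nat) (a b : 'cV[R]_n) : R :=
  \sum_i a i 0 * b i 0.

Definition norm1 (R : realType) (n : nat) (v : 'cV[R]_n) : R :=
  \sum_i `|v i 0|.

Definition norm2 (R : realType) (n : nat) (v : 'cV[R]_n) : R :=
  Num.sqrt (\sum_i v i 0 ^+ 2).

Definition spt_card (R : realType) (n : nat) (v : 'cV[R]_n) : nat :=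
  #|[set i | v i 0 != 0]|.

(* mu_X = max_{i<j} |V_i^T V_j| / (||V_i|| ||V_j||)  (0 if p < 2) *)
Definition muX (R : realType) (n p : nat) (X : 'M[R]_(n, p)) : R :=
  \big[Num.max/0]_(i < p) \big[Num.max/0]_(j < p | (i < j)%N)
     (`|inner (col i X) (col j X)| / (norm2 (col i X) * norm2 (col j X))).

Definition bX (R : realType) (n p : nat) (X : 'M[R]_(n, p)) : R :=
  \big[Num.max/0]_(i < p) (norm2 (col i X) ^+ 2 / n%:R).

(* a_X = min_i ||V_i||^2 / n  (the seed b_X does not affect the min for p >= 1) *)
Definition aX (R : realType) (n p : nat) (X : 'M[R]_(n, p)) : R :=
  \big[Num.min/bX X]_(i < p) (norm2 (col i X) ^+ 2 / n%:R).

(* Main.v *)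
Require Import Defs.
From HB Require Import structures.
From mathcomp Require Import all_boot all_order all_algebra.
From mathcomp Require Import all_classical all_reals all_analysis.
From mathcomp Require Import ring lra.
Set Implicit Arguments. Unset Strict Implicit. Unset Printing Implicit Defensive.
Import Order.TTheory GRing.Theory Num.Theory.
Local Open Scope ring_scope.

Lemma bigmax_ge (R : realType) (I : eqType) (r : seq I) (P : pred I) (F : I -> R) x i0 :
  i0 \in r -> P i0 -> F i0 <= \big[Num.max/x]_(i <- r | P i) F i.
Proof.
elim: r => //= a r IH; rewrite in_cons big_cons; case/orP => [/eqP<-|H] HP.
  by rewrite HP le_max lexx.
by case: (P a); [rewrite le_max IH ?orbT | apply IH].
Qed.

Lemma bigmin_le (R : realType) (I : eqType) (r : seq I) (P : pred I) (F : I -> R) x i0 :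
  i0 \in r -> P i0 -> \big[Num.min/x]_(i <- r | P i) F i <= F i0.
Proof.
elim: r => //= a r IH; rewrite in_cons big_cons; case/orP => [/eqP<-|H] HP.
  by rewrite HP ge_min lexx.
by case: (P a); [rewrite ge_min IH ?orbT | apply IH].
Qed.

Lemma inner_mulmx (R : realType) n p (X : 'M[R]_(n, p)) (y z : 'cV[R]_p) :
  inner (X *m y) (X *m z) =
  \sum_i \sum_j y i 0 * z j 0 * inner (col i X) (col j X).
Proof.
rewrite /inner.
transitivity (\sum_k \sum_i \sum_j y i 0 * z j 0 * (X k i * X k j)).
  apply: eq_bigr => k _; rewrite !mxE mulr_suml; apply: eq_bigr => i _.
  rewrite mulr_sumr; apply: eq_bigr => j _; ring.
rewrite exchange_big; apply: eq_bigr => i _.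
rewrite exchange_big; apply: eq_bigr => j _.
rewrite mulr_sumr; apply: eq_bigr => k _; rewrite ?mxE; ring.
Qed.

Lemma inner_sym (R : realType) n (a b : 'cV[R]_n) : inner a b = inner b a.
Proof. by rewrite /inner; apply: eq_bigr => i _; rewrite mulrC. Qed.

Lemma inner_ge0 (R : realType) n (a : 'cV[R]_n) : 0 <= inner a a.
Proof. by rewrite /inner; apply: sumr_ge0 => i _; rewrite -expr2 sqr_ge0. Qed.

Lemma norm2_sq (R : realType) n (a : 'cV[R]_n) : norm2 a ^+ 2 = inner a a.
Proof.
rewrite /norm2 sqr_sqrtr; last by apply: sumr_ge0 => i _; rewrite sqr_ge0.
by rewrite /inner; apply: eq_bigr => i _; rewrite expr2.
Qed.

Lemma norm2_ge0 (R : realType) n (a : 'cV[R]_n) : 0 <= norm2 a.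
Proof. exact: sqrtr_ge0. Qed.

Lemma norm2_gt0 (R : realType) n (a : 'cV[R]_n) : a != 0 -> 0 < norm2 a.
Proof.
move=> Ha; rewrite /norm2 sqrtr_gt0 lt_def sumr_ge0 ?andbT; last first.
  by move=> i _; rewrite sqr_ge0.
apply: contra Ha; rewrite psumr_eq0; last by move=> i _; rewrite sqr_ge0.
move/allP => H; apply/eqP/matrixP => i j; rewrite (ord1 j) mxE.
have := H i (mem_index_enum _); rewrite /= sqrf_eq0 => /eqP ->; done.
Qed.

Lemma innerDD (R : realType) n (a b : 'cV[R]_n) :
  inner (a + b) (a + b) = inner a a + 2%:R * inner a b + inner b b.
Proof.
rewrite /inner mulr_sumr -!big_split /=; apply: eq_bigr => i _; rewrite !mxE; ring.
Qed.

Definition gram (R : realType) n p (X : 'M[R]_(n,p)) i j := inner (col i X) (col j X).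

Lemma muX_ge0 (R : realType) n p (X : 'M[R]_(n,p)) : 0 <= muX X.
Proof.
rewrite /muX; apply: (big_ind (fun x => 0 <= x)) => //; first by move=> x y Hx Hy; rewrite le_max Hx.
move=> i _; apply: (big_ind (fun x => 0 <= x)) => //; first by move=> x y Hx Hy; rewrite le_max Hx.
move=> j _; apply: divr_ge0; first exact: normr_ge0.
by apply: mulr_ge0; apply: norm2_ge0.
Qed.

Lemma bX_ge0 (R : realType) n p (X : 'M[R]_(n,p)) : 0 <= bX X.
Proof.
rewrite /bX; apply: (big_ind (fun x => 0 <= x)) => //; first by move=> x y Hx Hy; rewrite le_max Hx.
move=> i _; apply: divr_ge0; last by rewrite ler0n.
by rewrite norm2_sq inner_ge0.
Qed.

Lemma coh_lt (R : realType) n p (X : 'M[R]_(n,p)) (i j : 'I_p) :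
  (forall j, col j X != 0) -> (i < j)%N ->
  `|gram X i j| <= muX X * (norm2 (col i X) * norm2 (col j X)).
Proof.
move=> Hc Hij.
have Hp : 0 < norm2 (col i X) * norm2 (col j X) by rewrite mulr_gt0 ?norm2_gt0.
rewrite -ler_pdivrMr //.
apply: le_trans (bigmax_ge _ _ (mem_index_enum i) (erefl true)).
by apply: (bigmax_ge (fun j => _) _ (mem_index_enum j)).
Qed.

Lemma coh (R : realType) n p (X : 'M[R]_(n,p)) (i j : 'I_p) :
  (forall j, col j X != 0) -> i != j ->
  `|gram X i j| <= muX X * (norm2 (col i X) * norm2 (col j X)).
Proof.
move=> Hc; rewrite neq_ltn => /orP [H|H]; first exact: coh_lt.
by rewrite /gram inner_sym (mulrC (norm2 (col i X))) coh_lt.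
Qed.

Lemma Nsq_le (R : realType) n p (X : 'M[R]_(n,p)) (i : 'I_p) :
  (0 < n)%N -> norm2 (col i X) ^+ 2 <= n%:R * bX X.
Proof.
move=> Hn; rewrite mulrC -ler_pdivrMr ?ltr0n //.
exact: (bigmax_ge (fun i => _) _ (mem_index_enum i)).
Qed.

Lemma Nsq_ge (R : realType) n p (X : 'M[R]_(n,p)) (i : 'I_p) :
  (0 < n)%N -> n%:R * aX X <= norm2 (col i X) ^+ 2.
Proof.
move=> Hn; rewrite mulrC -ler_pdivlMr ?ltr0n //.
exact: (bigmin_le (fun i => _) _ (mem_index_enum i)).
Qed.

Lemma cohM (R : realType) n p (X : 'M[R]_(n,p)) (i j : 'I_p) :
  (0 < n)%N -> (forall j, col j X != 0) -> i != j ->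
  `|gram X i j| <= n%:R * bX X * muX X.
Proof.
move=> Hn Hc Hij; apply: le_trans (coh Hc Hij) _.
rewrite mulrC; apply: ler_wpM2r; first exact: muX_ge0.
have := Nsq_le X i Hn; have := Nsq_le X j Hn.
have := norm2_ge0 (col i X); have := norm2_ge0 (col j X).
move=> *; nra.
Qed.

Lemma pt_bound (R : realType) n p (X : 'M[R]_(n,p)) (i j : 'I_p) (a b : R) :
  (0 < n)%N -> (forall j, col j X != 0) -> i != j ->
  - (n%:R * bX X * muX X * `|a| * `|b|) <= a * b * gram X i j.
Proof.
move=> Hn Hc Hij; have H := cohM Hn Hc Hij.
apply: le_trans (lerNnormlW (lexx _)); rewrite lerN2 !normrM.
have -> : n%:R * bX X * muX X * `|a| * `|b| = `|a| * `|b| * (n%:R * bX X * muX X) by ring.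
by apply: ler_wpM2l => //; rewrite mulr_ge0 ?normr_ge0.
Qed.

Lemma L2 (R : realType) n p (X : 'M[R]_(n,p)) (v : 'cV[R]_p) :
  (0 < n)%N -> (forall j, col j X != 0) ->
  (n%:R * aX X + n%:R * bX X * muX X) * (\sum_i v i 0 ^+ 2)
   - n%:R * bX X * muX X * (\sum_i `|v i 0|) ^+ 2 <= inner (X *m v) (X *m v).
Proof.
move=> Hn Hc; rewrite inner_mulmx.
set M := n%:R * bX X * muX X.
have E1 : (n%:R * aX X + M) * (\sum_i v i 0 ^+ 2) =
   \sum_i \sum_j (if j == i then (n%:R * aX X + M) * v j 0 ^+ 2 else 0).
  rewrite mulr_sumr; apply: eq_bigr => i _.
  by rewrite (bigD1 i) //= eqxx big1 ?addr0 // => j /negPf ->.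
have E2 : M * (\sum_i `|v i 0|) ^+ 2 = \sum_i \sum_j M * `|v i 0| * `|v j 0|.
  rewrite expr2 mulr_suml mulr_sumr; apply: eq_bigr => i _.
  rewrite mulr_sumr mulr_sumr; apply: eq_bigr => j _; ring.
rewrite E1 E2 -sumrB; apply: ler_sum => i _; rewrite -sumrB; apply: ler_sum => j _.
case: (eqVneq j i) => [->|Hji].
  have H1 := Nsq_ge X i Hn.
  have Hn2 : `|v i 0| * `|v i 0| = v i 0 ^+ 2 by rewrite -expr2 real_normK ?num_real.
  have HM : 0 <= M by rewrite /M !mulr_ge0 ?ler0n ?bX_ge0 ?muX_ge0.
  rewrite ?eqxx -norm2_sq -mulrA Hn2; have := sqr_ge0 (v i 0); move=> *; nra.
rewrite ?(negPf Hji) sub0r -mulrA.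
have := pt_bound (v i 0) (v j 0) Hn Hc (i:=i) (j:=j).
by rewrite mulrA; apply; rewrite eq_sym.
Qed.

Lemma cross (R : realType) n p (X : 'M[R]_(n,p)) (y z : 'cV[R]_p) :
  (0 < n)%N -> (forall j, col j X != 0) -> (forall i, y i 0 * z i 0 = 0) ->
  - (n%:R * bX X * muX X * ((\sum_i `|y i 0|) * (\sum_i `|z i 0|)))
     <= inner (X *m y) (X *m z).
Proof.
move=> Hn Hc Hyz; rewrite inner_mulmx.
set M := n%:R * bX X * muX X.
have E2 : M * ((\sum_i `|y i 0|) * (\sum_i `|z i 0|)) = \sum_i \sum_j M * `|y i 0| * `|z j 0|.
  rewrite mulr_suml mulr_sumr; apply: eq_bigr => i _.
  rewrite mulr_sumr mulr_sumr; apply: eq_bigr => j _; ring.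
rewrite E2 -sumrN; apply: ler_sum => i _; rewrite -sumrN; apply: ler_sum => j _.
case: (eqVneq i j) => [<-|Hij].
  have HM : 0 <= M by rewrite /M !mulr_ge0 ?ler0n ?bX_ge0 ?muX_ge0.
  by rewrite Hyz mul0r oppr_le0; apply: mulr_ge0; [apply: mulr_ge0|]; rewrite ?normr_ge0.
exact: (pt_bound (y i 0) (z j 0) Hn Hc Hij).
Qed.
Lemma poly_ineq (R : realType) (tau : R) : 0 < tau ->
  4%:R * (4%:R * tau ^+ 2 + 12%:R * tau + 7%:R) ^+ 2 <=
  9%:R * (2%:R + (1 + 2%:R * tau) ^+ 2) * (3%:R + 4%:R * tau) ^+ 2.
Proof.
move=> H.
have H2 : 0 <= tau ^+ 2 by rewrite sqr_ge0.
have H3 : 0 <= tau ^+ 3 by rewrite exprn_ge0 // ltW.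
have H4 : 0 <= tau ^+ 4 by rewrite exprn_ge0 // ltW.
rewrite -subr_ge0.
have -> : 9%:R * (2%:R + (1 + 2%:R * tau) ^+ 2) * (3%:R + 4%:R * tau) ^+ 2 -
   4%:R * (4%:R * tau ^+ 2 + 12%:R * tau + 7%:R) ^+ 2 =
   512%:R * tau ^+ 4 + 1056%:R * tau ^+ 3 + 820%:R * tau ^+ 2 + 300%:R * tau + 47%:R
  by ring.
lra.
Qed.

Lemma fin (R : realType) (c1 c3 A lam nn s t u R2 W : R) :
  0 < c1 -> 0 < c3 -> 0 < A -> 0 < lam -> 0 < nn -> 0 <= s -> 0 <= t -> 0 <= u ->
  0 <= R2 -> 0 <= W ->
  c3 * nn * A * lam * R2 <= 2%:R * c1 * Num.sqrt nn * (2%:R + t) * u ->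
  u ^+ 2 <= s * R2 -> 4%:R <= 9%:R * W * lam ^+ 2 ->
  Num.sqrt R2 <= 3%:R * (2%:R + t) * Num.sqrt W / A * (c1 / c3) * Num.sqrt (s / nn).
Proof.
move=> Hc1 Hc3 HA Hl Hn Hs Ht Hu HR HW H1 H2 H3.
set k := 3%:R * (2%:R + t) * Num.sqrt W / A * (c1 / c3).
have Hk : 0 <= k.
  rewrite /k; repeat apply: mulr_ge0; rewrite ?invr_ge0 ?sqrtr_ge0 ?ltW //; lra.
rewrite -(ger0_norm Hk) -sqrtr_sqr -sqrtrM ?sqr_ge0 // ler_sqrt; last first.
  by rewrite mulr_ge0 ?sqr_ge0 // divr_ge0 // ltW.
have Ek : k ^+ 2 * (s / nn) = (9%:R * W * (c1 ^+ 2 * (2%:R + t) ^+ 2 * s)) / (c3 ^+ 2 * nn * A ^+ 2).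
  rewrite /k !exprMn sqr_sqrtr //; field.
  by rewrite !gt_eqF.
rewrite Ek ler_pdivlMr; last by rewrite !mulr_gt0 ?exprn_gt0.
set Y := R2 * (c3 ^+ 2 * nn * A ^+ 2).
set Z := c1 ^+ 2 * (2%:R + t) ^+ 2 * s.
have HZ : 0 <= Z by rewrite /Z; apply: mulr_ge0 => //; apply: mulr_ge0; exact: sqr_ge0.
have HY : 0 <= Y by rewrite /Y; apply: mulr_ge0 => //; apply: mulr_ge0; [apply: mulr_ge0; [exact: sqr_ge0|exact: ltW]|exact: sqr_ge0].
have Hsq : (2%:R * c1 * Num.sqrt nn * (2%:R + t) * u) ^+ 2 = 4%:R * nn * (c1 ^+ 2 * (2%:R + t) ^+ 2 * u ^+ 2).
  by rewrite !exprMn sqr_sqrtr ?ltW //; ring.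
have HL : 0 <= c3 * nn * A * lam * R2 by rewrite !mulr_ge0 // ltW.
have Hsq2 : (c3 * nn * A * lam * R2) ^+ 2 <= 4%:R * nn * (c1 ^+ 2 * (2%:R + t) ^+ 2 * u ^+ 2).
  by rewrite -Hsq expr2 [X in _ <= X]expr2; apply: ler_pM.
have H4 : lam ^+ 2 * Y * (R2 * nn) <= 4%:R * Z * (R2 * nn).
  have E : lam ^+ 2 * Y * (R2 * nn) = (c3 * nn * A * lam * R2) ^+ 2 by rewrite /Y; ring.
  rewrite E; apply: (le_trans Hsq2).
  have -> : 4%:R * Z * (R2 * nn) = 4%:R * nn * (c1 ^+ 2 * (2%:R + t) ^+ 2 * (s * R2)) by rewrite /Z; ring.
  apply: ler_wpM2l; first by rewrite mulr_ge0 ?ltW.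
  apply: ler_wpM2l => //; by rewrite mulr_ge0 ?sqr_ge0.
have [R0|RP] := eqVneq R2 0.
  have -> : Y = 0 by rewrite /Y R0 mul0r.
  by apply: mulr_ge0 => //; apply: mulr_ge0 => //; exact: ler0n.
have HRn : 0 < R2 * nn by rewrite mulr_gt0 // lt_def RP.
have H5 : lam ^+ 2 * Y <= 4%:R * Z by rewrite -(ler_pM2r HRn).
have Hl2 : 0 < lam ^+ 2 by rewrite exprn_gt0.
rewrite -(ler_pM2l Hl2).
apply: (le_trans H5).
have -> : lam ^+ 2 * (9%:R * W * Z) = (9%:R * W * lam ^+ 2) * Z by ring.
by apply: ler_wpM2r.
Qed.
Lemma CS (R : realType) p (S : {set 'I_p}) (a : 'I_p -> R) :
  (\sum_(i in S) a i) ^+ 2 <= #|S|%:R * \sum_(i in S) a i ^+ 2.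
Proof.
set T := \sum_(i in S) a i ^+ 2.
have E1 : 2%:R * (\sum_(i in S) a i) ^+ 2 = \sum_(i in S) \sum_(j in S) 2%:R * (a i * a j).
  rewrite expr2 mulr_suml mulr_sumr; apply: eq_bigr => i _; rewrite mulr_sumr mulr_sumr.
  by apply: eq_bigr => j _; ring.
have E2 : \sum_(i in S) \sum_(j in S) (a i ^+ 2 + a j ^+ 2) = 2%:R * (#|S|%:R * T).
  transitivity (\sum_(i in S) (a i ^+ 2 *+ #|S| + T)).
    by apply: eq_bigr => i _; rewrite big_split /= sumr_const.
  rewrite big_split /= sumrMnl sumr_const -/T -[T *+ #|S|]mulr_natl; ring.
have H : 2%:R * (\sum_(i in S) a i) ^+ 2 <= 2%:R * (#|S|%:R * T).
  rewrite E1 -E2; apply: ler_sum => i _; apply: ler_sum => j _.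
  have := sqr_ge0 (a i - a j); rewrite sqrrB; lra.
by rewrite -(ler_pM2l (_ : 0 < 2%:R)) ?ltr0n.
Qed.
Lemma det (R : realType) n p (X : 'M[R]_(n,p)) (beta h : 'cV[R]_p) (c1 c3 tau : R) :
  (0 < n)%N -> (forall j, col j X != 0) -> 0 < c1 -> 0 < c3 -> 0 < tau ->
  aX X + bX X * muX X > 2%:R * bX X * (3%:R + 4%:R * tau) * (spt_card beta)%:R * muX X ->
  c3 * inner (X *m h) (X *m h) <= 2%:R * (c1 * Num.sqrt n%:R * norm1 h)
      - (2%:R * (1 + tau^-1) * c1 * Num.sqrt n%:R) * (norm1 (beta + h) - norm1 beta) ->
  norm2 h <= (3%:R * (2%:R + tau^-1) * Num.sqrt (2%:R + (1 + 2%:R * tau) ^+ 2)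
            / (aX X + bX X * muX X) * (c1 / c3)) * Num.sqrt ((spt_card beta)%:R / n%:R).
Proof.
move=> Hn Hc Hc1 Hc3 Htau Hcoh Hbasic.
set S := [set i | beta i 0 != 0].
set A := aX X + bX X * muX X.
set M := n%:R * bX X * muX X.
set t := tau^-1.
set Q := inner (X *m h) (X *m h).
set K := 2%:R * c1 * Num.sqrt n%:R.
have Ht : tau * t = 1 by rewrite /t mulfV ?gt_eqF.
have Ht0 : 0 <= t by rewrite /t invr_ge0 ltW.
have HK : 0 <= K by rewrite /K !mulr_ge0 ?sqrtr_ge0 ?ler0n // ltW.
set u := \sum_(i in S) `|h i 0|.
set w := \sum_(i | i \notin S) `|h i 0|.
set rS := \sum_(i in S) h i 0 ^+ 2.
set rc := \sum_(i | i \notin S) h i 0 ^+ 2.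
have En1 : norm1 h = u + w by rewrite /norm1 (bigID (fun i => i \in S)).
have ER : \sum_i h i 0 ^+ 2 = rS + rc by rewrite (bigID (fun i => i \in S)).
have Hu0 : 0 <= u by rewrite /u sumr_ge0 // => i _; rewrite normr_ge0.
have Hw0 : 0 <= w by rewrite /w sumr_ge0 // => i _; rewrite normr_ge0.
have HrS : 0 <= rS by rewrite /rS sumr_ge0 // => i _; rewrite sqr_ge0.
have Hrc : 0 <= rc by rewrite /rc sumr_ge0 // => i _; rewrite sqr_ge0.
have Hnd : - u + w <= norm1 (beta + h) - norm1 beta.
  rewrite /norm1 -sumrB (bigID (fun i => i \in S)) /=; apply: lerD.
    rewrite /u -sumrN; apply: ler_sum => i _; rewrite mxE.
    have := ler_normD (beta i 0 + h i 0) (- h i 0); rewrite normrN addrK; lra.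
  apply: ler_sum => i; rewrite inE negbK => /eqP Hb; rewrite mxE Hb add0r normr0 subr0 //.
have Hb1 : c3 * Q <= K * ((2%:R + t) * u - t * w).
  apply: (le_trans Hbasic); rewrite En1.
  have Hco : 0 <= 2%:R * (1 + t) * c1 * Num.sqrt n%:R.
    by rewrite !mulr_ge0 ?sqrtr_ge0 ?ler0n ?addr_ge0 // ltW.
  have := ler_wpM2l Hco Hnd.
  have -> : K * ((2%:R + t) * u - t * w) = 2%:R * (c1 * Num.sqrt n%:R * (u + w))
      - 2%:R * (1 + t) * c1 * Num.sqrt n%:R * (- u + w) by rewrite /K; ring.
  rewrite -/t; lra.
have HQ0 : 0 <= Q by apply: inner_ge0.
have Hcone : w <= (1 + 2%:R * tau) * u.
  have H0 : 0 <= K * ((2%:R + t) * u - t * w).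
    by apply: le_trans Hb1; rewrite mulr_ge0 // ltW.
  have HK0 : 0 < K by rewrite /K !mulr_gt0 ?sqrtr_gt0 ?ltr0n.
  rewrite pmulr_rge0 // in H0.
  have := mulr_ge0 (ltW Htau) H0.
  have -> : tau * ((2%:R + t) * u - t * w) = 2%:R * tau * u + (tau * t) * u - (tau * t) * w by ring.
  rewrite Ht; lra.
have Hb2 : c3 * Q <= K * ((2%:R + t) * u).
  apply: (le_trans Hb1); apply: ler_wpM2l => //.
  have := mulr_ge0 Ht0 Hw0; lra.
set y : 'cV[R]_p := \col_i (if i \in S then h i 0 else 0).
set z : 'cV[R]_p := \col_i (if i \in S then 0 else h i 0).
have Ehyz : h = y + z.
  by apply/matrixP => i j; rewrite (ord1 j) !mxE; case: (i \in S); rewrite ?addr0 ?add0r.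
have Hyz : forall i, y i 0 * z i 0 = 0.
  by move=> i; rewrite !mxE; case: (i \in S); rewrite ?mulr0 ?mul0r.
have Eyu : \sum_i `|y i 0| = u.
  by rewrite /u [RHS]big_mkcond; apply: eq_bigr => i _; rewrite mxE; case: (i \in S); rewrite ?normr0.
have Ezw : \sum_i `|z i 0| = w.
  by rewrite /w [RHS]big_mkcond; apply: eq_bigr => i _; rewrite mxE; case: (i \in S); rewrite ?normr0.
have Eyr : \sum_i y i 0 ^+ 2 = rS.
  by rewrite /rS [RHS]big_mkcond; apply: eq_bigr => i _; rewrite mxE; case: (i \in S); rewrite ?expr2 ?mul0r.
have Ezr : \sum_i z i 0 ^+ 2 = rc.
  by rewrite /rc [RHS]big_mkcond; apply: eq_bigr => i _; rewrite mxE; case: (i \in S); rewrite ?expr2 ?mul0r.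
have EQ : Q = inner (X *m y) (X *m y) + 2%:R * inner (X *m y) (X *m z) + inner (X *m z) (X *m z).
  by rewrite /Q Ehyz mulmxDr innerDD.
have L2y := L2 y Hn Hc; rewrite Eyu Eyr -/M in L2y.
have L2z := L2 z Hn Hc; rewrite Ezw Ezr -/M in L2z.
have Lyz := cross Hn Hc Hyz; rewrite Eyu Ezw -/M in Lyz.
have Lzz := inner_ge0 (X *m z).
have EnA : n%:R * aX X + M = n%:R * A by rewrite /M /A; ring.
rewrite EnA in L2y L2z.
have Hs : spt_card beta = #|S| by [].
rewrite Hs in Hcoh *.
set s := #|S|%:R.
have HCS : u ^+ 2 <= s * rS.
  have := CS S (fun i => `|h i 0|); rewrite -/u.
  have -> : \sum_(i in S) `|h i 0| ^+ 2 = rS.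
    by apply: eq_bigr => i _; rewrite real_normK ?num_real.
  done.
have Hs0 : 0 <= s by rewrite /s ler0n.
have HM0 : 0 <= M by rewrite /M !mulr_ge0 ?ler0n ?bX_ge0 ?muX_ge0.
have Hn0 : 0 < n%:R :> R by rewrite ltr0n.
have HMs : 2%:R * (3%:R + 4%:R * tau) * (M * s) <= n%:R * A.
  have := ltW Hcoh; rewrite -(ler_pM2l Hn0) -/s.
  have -> : n%:R * (2%:R * bX X * (3%:R + 4%:R * tau) * s * muX X) =
     2%:R * (3%:R + 4%:R * tau) * (M * s) by rewrite /M; ring.
  done.
have HA : 0 < A.
  apply: le_lt_trans Hcoh; rewrite -/s.
  by rewrite !mulr_ge0 ?bX_ge0 ?muX_ge0 ?ler0n // addr_ge0 // mulr_ge0 // ?ler0n ltW.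
set den := 4%:R * tau ^+ 2 + 12%:R * tau + 7%:R.
set c := 3%:R + 4%:R * tau.
set lam := c / den.
have Hden : 0 < den by rewrite /den; have := sqr_ge0 tau; lra.
have Hc0 : 0 < c by rewrite /c; lra.
have Hl0 : 0 < lam by rewrite /lam divr_gt0.
have Hleq : lam * den = c by rewrite /lam mulfVK ?gt_eqF.
have Hl1 : lam <= 1 by rewrite /lam ler_pdivrMr // mul1r /c /den; have := sqr_ge0 tau; lra.
set B := n%:R * A * rc - M * w ^+ 2.
have Hzz : lam * B <= inner (X *m z) (X *m z).
  case: (lerP 0 B) => HB.
    apply: le_trans L2z; have := ler_wpM2r HB Hl1; rewrite mul1r //.
  apply: le_trans Lzz; rewrite mulr_ge0_le0 ?ltW //.
have Hw1 : u * w <= (1 + 2%:R * tau) * u ^+ 2.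
  have := ler_wpM2l Hu0 Hcone; rewrite expr2; lra.
have Hw2 : w ^+ 2 <= (1 + 2%:R * tau) ^+ 2 * u ^+ 2.
  have := ler_pM Hw0 Hw0 Hcone Hcone; rewrite !expr2; lra.
set k := (1 + 2%:R * tau) ^+ 2.
have Hlw : lam * w ^+ 2 <= lam * (k * u ^+ 2) by apply: ler_wpM2l => //; exact: ltW.
have HP : u ^+ 2 + 2%:R * (u * w) + lam * w ^+ 2 <= (c + lam * k) * u ^+ 2.
  rewrite /c; lra.
have Hck : c + lam * k = 2%:R * c * (1 - lam).
  have Ed : den = k + 2%:R * c by rewrite /den /k /c; ring.
  rewrite Ed in Hleq; lra.
have Hcl : 0 <= c + lam * k by rewrite Hck; apply: mulr_ge0; [rewrite mulr_ge0 ?ler0n ?ltW|rewrite subr_ge0].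
have HP2 : M * (u ^+ 2 + 2%:R * (u * w) + lam * w ^+ 2) <= n%:R * A * (1 - lam) * rS.
  apply: (le_trans (ler_wpM2l HM0 HP)).
  apply: (le_trans (y := M * (c + lam * k) * (s * rS))).
    by rewrite mulrA; apply: ler_wpM2l => //; rewrite mulr_ge0.
  rewrite Hck.
  have -> : M * (2%:R * c * (1 - lam)) * (s * rS) = (2%:R * c * (M * s)) * ((1 - lam) * rS) by ring.
  rewrite -(mulrA (n%:R * A)); apply: ler_wpM2r; first by rewrite mulr_ge0 // subr_ge0.
  by rewrite /c.
have HQl : n%:R * A * lam * (rS + rc) <= Q.
  rewrite EQ.
  have E1 : M * (u ^+ 2 + 2%:R * (u * w) + lam * w ^+ 2) = M * u ^+ 2 + 2%:R * (M * (u * w)) + lam * (M * w ^+ 2) by ring.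
  rewrite E1 in HP2.
  have E2 : lam * B = lam * (n%:R * A * rc) - lam * (M * w ^+ 2) by rewrite /B; ring.
  rewrite E2 in Hzz.
  have E3 : n%:R * A * lam * (rS + rc) = n%:R * A * rS - n%:R * A * (1 - lam) * rS + lam * (n%:R * A * rc) by ring.
  rewrite E3; lra.
have -> : norm2 h = Num.sqrt (rS + rc) by rewrite /norm2 ER.
have HW : 0 <= 2%:R + k by rewrite /k addr_ge0 ?ler0n ?sqr_ge0.
apply: (fin Hc1 Hc3 HA Hl0 Hn0 Hs0 Ht0 Hu0 (addr_ge0 HrS Hrc) HW).
- have := ler_wpM2l (ltW Hc3) HQl => H1.
  have := le_trans H1 Hb2; rewrite /K.
  have -> : c3 * (n%:R * A * lam * (rS + rc)) = c3 * n%:R * A * lam * (rS + rc) by ring.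
  have -> : 2%:R * c1 * Num.sqrt n%:R * ((2%:R + t) * u) = 2%:R * c1 * Num.sqrt n%:R * (2%:R + t) * u by ring.
  done.
- apply: (le_trans HCS); apply: ler_wpM2l => //; lra.
- rewrite /lam expr_div_n mulrA ler_pdivlMr; last by rewrite exprn_gt0.
  rewrite /c /den /k; exact: poly_ineq.
Qed.

Unset Implicit Arguments.
Local Open Scope classical_set_scope.

Theorem proposition2p2 (R : realType) (d : measure_display) (T : measurableType d)
  (P : probability T R) (n p : nat) (X : 'M[R]_(n, p)) (beta : 'cV[R]_p)
  (eps : T -> 'cV[R]_n) (D : set 'cV[R]_p) (G : 'cV[R]_n -> R)
  (psi phi : 'I_n -> R -> R) (q c0 c1 c3 tau : R) (betahat : T -> 'cV[R]_p) :
  (forall j : 'I_p, col j X != 0) ->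
  0 < q < 1 -> 0 < c0 ->
  (* (i) *)
  0 < c1 ->
  measurable [set w | forall v, D v ->
     `|inner (eps w) (capp phi (X *m v) - capp phi (X *m beta))|
       <= c1 * Num.sqrt n%:R * norm1 (v - beta)] ->
  (P [set w | (forall v, D v ->
     `|inner (eps w) (capp phi (X *m v) - capp phi (X *m beta))|
       <= c1 * Num.sqrt n%:R * norm1 (v - beta))%R] >= (1 - c0 * q)%:E)%E ->
  (* (ii) *)
  0 < c3 ->
  (forall v, D v ->
     G (capp psi (X *m v) - capp psi (X *m beta))
       >= c3 * norm2 (X *m v - X *m beta) ^+ 2) ->
  aX X + bX X * muX X > 6%:R * bX X * (spt_card beta)%:R * muX X ->
  0 < tau ->
  aX X + bX X * muX X > 2%:R * bX X * (3%:R + 4%:R * tau) * (spt_card beta)%:R * muX X ->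
  (forall w, D (betahat w)) ->
  (forall w,
     G (capp psi (X *m betahat w) - capp psi (X *m beta))
       <= 2%:R * `|inner (eps w) (capp phi (X *m betahat w) - capp phi (X *m beta))|
          - (2%:R * (1 + tau^-1) * c1 * Num.sqrt n%:R)
              * (norm1 (betahat w) - norm1 beta)) ->
  measurable [set w | norm2 (betahat w - beta)
      <= (3%:R * (2%:R + tau^-1) * Num.sqrt (2%:R + (1 + 2%:R * tau) ^+ 2)
            / (aX X + bX X * muX X) * (c1 / c3))
         * Num.sqrt ((spt_card beta)%:R / n%:R)] ->
  (P [set w | (norm2 (betahat w - beta)
      <= (3%:R * (2%:R + tau^-1) * Num.sqrt (2%:R + (1 + 2%:R * tau) ^+ 2)
            / (aX X + bX X * muX X) * (c1 / c3))
         * Num.sqrt ((spt_card beta)%:R / n%:R))%R] >= (1 - c0 * q)%:E)%E.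

Proof.
move=> Hc Hq Hc0 Hc1 Hm1 HP1 Hc3 Hii Hcoh6 Htau Hcoh Hbh Hbasic Hm2.
have Hn : (0 < n)%N.
  case: (posnP n) => // n0.
  case: (posnP p) => [p0|pp].
    exfalso; move: Hcoh6; subst p; rewrite /aX /bX /muX !big_ord0.
    by rewrite !(mulr0, mul0r, addr0) ltxx.
  have := Hc (Ordinal pp); subst n.
  have -> : col (Ordinal pp) X = 0 by apply/matrixP => -[i Hi]; by [].  
  by rewrite eqxx.
apply: (le_trans HP1); apply: (le_measure P (mem_set Hm1) (mem_set Hm2)) => w /= Hw.
apply: det => //.
have Ebh : beta + (betahat w - beta) = betahat w by rewrite addrC subrK.
rewrite Ebh.
have H1 := Hii (betahat w) (Hbh w).
rewrite -mulmxBr norm2_sq in H1.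
have H2 := Hbasic w.
have H3 := Hw (betahat w) (Hbh w).
set I1 := `|inner _ _| in H2 H3.
lra.
Qed.
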